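(* Let $n\geq 1$ and $m\geq 1$ be integers. Then \[\frac{1}{n!}\sum_{\pi\in S_n}|{\bf B}^{-1}({\bf B}(\pi))|^m=\prod_{j=1}^{n-1}\frac{2^{m+1}+n-j-1}{n-j+1}.\]
   Context: $S_n$ is the set of permutations of $\{1,\dots,n\}$ written as words $\pi_1\cdots\pi_n$. For $i\in\{1,\dots,n-1\}$, $t_i(\pi)$ swaps $\pi_i$ and $\pi_{i+1}$ if $\pi_i>\pi_{i+1}$ and leaves $\pi$ unchanged otherwise. The bubble sort map is ${\bf B}=t_{n-1}\circ\cdots\circ t_1:S_n\to S_n$, and ${\bf B}^{-1}(\sigma)=\{\tau\in S_n:{\bf B}(\tau)=\sigma\}$. *)

(* Defs.v *)
From mathcomp Require Import all_boot all_order all_algebra all_fingroup.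
From mathcomp Require Import perm.
Set Implicit Arguments. Unset Strict Implicit. Unset Printing Implicit Defensive.

(* A permutation pi of 'I_n is read as the word pi 0, pi 1, ..., pi (n-1)
   (0-indexed positions and values; the order is the same as for 1..n). *)

Definition bs_step (n : nat) (i : nat) (p : 'S_n) : 'S_n :=
  match ltnP i.+1 n with
  | LtnNotGeq h =>
    let a : 'I_n := Ordinal (ltnW h) in
    let b : 'I_n := Ordinal h in
    if p b < p a then (tperm a b * p)%g else p
  | GeqNotLtn _ => p
  end.
(* Note: (tperm a b * p)%g is the map x |-> p (tperm a b x), i.e. the word with
   positions a and b swapped. *)

(* Bubble sort map B = t_{n-1} o ... o t_1 (1-indexed), i.e. apply t at
   0-indexed positions 0, 1, ..., n-2 in this order. *)
Definition bubble (n : nat) (p : 'S_n) : 'S_n :=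
  foldl (fun q i => bs_step i q) p (iota 0 n.-1).

Definition bubble_preimage (n : nat) (s : 'S_n) : {set 'S_n} :=
  [set t : 'S_n | bubble t == s].

(* Main.v *)
Require Import Defs.
From mathcomp Require Import all_boot all_order all_algebra all_fingroup.
From mathcomp Require Import zify ring.
Set Implicit Arguments. Unset Strict Implicit. Unset Printing Implicit Defensive.

Fixpoint bs_aux (y : nat) (t : seq nat) : seq nat :=
  match t with
  | [::] => [:: y]
  | z :: t' => if z < y then z :: bs_aux y t' else y :: bs_aux z t'
  end.
Definition bs (s : seq nat) := if s is y :: t then bs_aux y t else [::].

Definition ins (x : nat) (i : nat) (s : seq nat) := take i s ++ x :: drop i s.

Lemma bs_aux_ins x y t i : x < y -> all (fun z => x < z) t -> i <= size t ->
  bs_aux y (ins x i t) = ins x i (bs_aux y t).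
Proof.
elim: t y i => [|z t IH] y i xy /=.
  by case: i => //= _ _; rewrite /ins /= xy.
move=> /andP [xz xt] hi.
case: i hi => [|i] hi.
  by rewrite /ins /= xy take0 drop0.
rewrite /ins /= -/(ins x i t); case: ifP => zy /=; rewrite -/(ins x i t) IH //.
Qed.

Lemma bs_ins x i s : all (fun z => x < z) s -> i <= size s ->
  bs (ins x i s) = ins x i.-1 (bs s).
Proof.
case: s => [|y t] /=.
  by case: i.
move=> /andP [xy xt].
case: i => [|i] hi.
  by rewrite /ins /= ltnNge (ltnW xy) take0 drop0.
by rewrite /ins /= -/(ins x i t) bs_aux_ins.
Qed.

Lemma perm_bs_aux y t : perm_eq (bs_aux y t) (y :: t).
Proof.
elim: t y => [|z t IH] y //=.
case: ifP => _.
  apply: (perm_trans (y:=z::y::t)); first by rewrite perm_cons IH.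
  by rewrite -[z :: y :: t]/([:: z] ++ [:: y] ++ t) perm_catCA.
by rewrite perm_cons.
Qed.

Lemma perm_bs s : perm_eq (bs s) s.
Proof. by case: s => //= y t; apply: perm_bs_aux. Qed.

Lemma size_bs s : size (bs s) = size s.
Proof. exact: perm_size (perm_bs s). Qed.

Lemma perm_ins x i s : perm_eq (ins x i s) (x :: s).
Proof.
by rewrite /ins -cat1s perm_catCA /= cat_take_drop.
Qed.

Lemma index_ins x i s : x \notin s -> i <= size s -> index x (ins x i s) = i.
Proof.
move=> xs hi; rewrite /ins index_cat ifN; last first.
  by apply: contra xs; apply: mem_take.
by rewrite /= eqxx addn0 size_take; case: ltngtP hi => // ->.
Qed.

Lemma filter_ins x i s : x \notin s -> filter (predC1 x) (ins x i s) = s.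
Proof.
move=> xs; rewrite /ins filter_cat /= eqxx /= -filter_cat cat_take_drop.
by apply/all_filterP/allP => z zs /=; apply: contraNneq xs => <-.
Qed.

Lemma ins_eq x a b u v : x \notin u -> x \notin v -> a <= size u -> b <= size v ->
  (ins x a u == ins x b v) = (a == b) && (u == v).
Proof.
move=> xu xv au bv; apply/eqP/andP => [e|[/eqP -> /eqP ->]] //.
split; apply/eqP.
  by rewrite -(index_ins xu au) e index_ins.
by rewrite -(filter_ins a xu) e filter_ins.
Qed.

Fixpoint myperms (s : seq nat) : seq (seq nat) :=
  if s is x :: s' then [seq ins x j t | t <- myperms s', j <- iota 0 (size s').+1]
  else [:: [::]].

Lemma myperms_cons x s : myperms (x :: s) =
  [seq ins x j t | t <- myperms s, j <- iota 0 (size s).+1].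
Proof. by []. Qed.

Lemma myperms_perm s t : t \in myperms s -> perm_eq t s.
Proof.
elim: s t => [|x s IH] t; rewrite ?myperms_cons.
  by rewrite inE => /eqP ->.
case/allpairsP => [[t' j] [/= ht' hj ->]].
apply: perm_trans (perm_ins x j t') _.
by rewrite perm_cons IH.
Qed.

Lemma perm_myperms s t : perm_eq t s -> t \in myperms s.
Proof.
elim: s t => [|x s IH] t; rewrite ?myperms_cons.
  by move=> /perm_size; case: t => // _; rewrite inE.
move=> pt.
have xt : x \in t by rewrite (perm_mem pt) mem_head.
case/splitPr: xt pt => p1 p2 pt.
have pt' : perm_eq (p1 ++ p2) s.
  by rewrite -(perm_cons x); apply: perm_trans pt; rewrite -[x :: _]/([:: x] ++ _) perm_catCA.
apply/allpairsP; exists (p1 ++ p2, size p1) => /=; split.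
- exact: IH.
- by rewrite -/(iota 0 (size s).+1) mem_iota /= ltnS -(perm_size pt') size_cat leq_addr.
- by rewrite /ins take_size_cat // drop_size_cat.
Qed.

Lemma size_myperms s t : t \in myperms s -> size t = size s.
Proof. by move/myperms_perm/perm_size. Qed.

Lemma uniq_myperms s : uniq s -> uniq (myperms s).
Proof.
elim: s => [|x s IH] //; rewrite myperms_cons cons_uniq => /andP [xs us].
apply: allpairs_uniq; [exact: IH | exact: iota_uniq |].
move=> [t1 j1] [t2 j2] H1 H2; case/allpairsP: H1 => [[a b] [ha hb [-> ->]]]; case/allpairsP: H2 => [[c d] [hc hd [-> ->]]] /=.
move=> /eqP; rewrite ins_eq.
- by case/andP => /eqP -> /eqP ->.
- by rewrite (perm_mem (myperms_perm ha)).
- by rewrite (perm_mem (myperms_perm hc)).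
- by rewrite (size_myperms ha) -ltnS; move: hb; rewrite mem_iota.
- by rewrite (size_myperms hc) -ltnS; move: hd; rewrite mem_iota.
Qed.

Definition fib s (σ : seq nat) : nat := \sum_(π <- myperms s) (bs π == σ).
Definition N k s : nat := \sum_(σ <- myperms s) fib s σ ^ k.

Lemma sum_iota_eq a n c : \sum_(i <- iota a n) (i == c) = (a <= c < a + n).
Proof.
elim: n a => [|n IH] a /=; first by rewrite big_nil addn0; lia.
rewrite big_cons IH.
lia.
Qed.

Lemma cnt_eq L j : \sum_(i <- iota 0 L.+1) (i.-1 == j) = (j < L) + (j == 0).
Proof.
transitivity (\sum_(i <- iota 0 L.+1) ((i == j.+1) + (j == 0) * (i == 0))).
  apply: eq_bigr => i _.
  by case: i => [|i]; case: j => [|j]; rewrite /= ?eqSS ?muln0 ?muln1 ?addn0 ?addn1.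
rewrite big_split -big_distrr -/(iota 0 L.+1) !sum_iota_eq add0n ltnS ltnS /=.
by case: (j == 0); lia.
Qed.

Lemma notin_all x s : all (fun z => x < z) s -> x \notin s.
Proof. by move=> h; apply/negP => /(allP h); rewrite ltnn. Qed.

Lemma fib_ins x s σ' j0 : all (fun z => x < z) s -> σ' \in myperms s -> j0 <= size s ->
  fib (x :: s) (ins x j0 σ') = fib s σ' * ((j0 < size s) + (j0 == 0)).
Proof.
move=> hall hs hj0.
have xs := notin_all hall.
rewrite /fib myperms_cons big_allpairs_dep /=.
rewrite -cnt_eq big_distrl /=.
rewrite big_seq [RHS]big_seq; apply: eq_bigr => t ht.
rewrite big_distrr /= big_seq [RHS]big_seq; apply: eq_bigr => j hj.
have pt := myperms_perm ht.
have jt : j <= size t by rewrite (size_myperms ht) -ltnS; move: hj; rewrite -?/(iota 0 (size s).+1) mem_iota.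
rewrite bs_ins //; last by rewrite (perm_all _ pt).
rewrite ins_eq //.
- by case: eqP; case: eqP.
- by rewrite (perm_mem (perm_bs t)) (perm_mem pt).
- by rewrite (perm_mem (myperms_perm hs)).
- by rewrite size_bs (leq_trans (leq_pred j)).
- by rewrite (size_myperms hs).
Qed.

Lemma N_cons k x s : 0 < k -> all (fun z => x < z) s -> 0 < size s ->
  N k (x :: s) = N k s * (2 ^ k + (size s).-1).
Proof.
move=> hk hall hL.
rewrite /N myperms_cons big_allpairs_dep /= big_distrl /=.
rewrite big_seq [RHS]big_seq; apply: eq_bigr => t ht.
transitivity (\sum_(j <- iota 0 (size s).+1) fib s t ^ k * ((j < size s) + (j == 0)) ^ k).
  rewrite big_seq [RHS]big_seq; apply: eq_bigr => j hj.
  rewrite fib_ins // ?expnMn //.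
  by rewrite -ltnS; move: hj; rewrite -?/(iota 0 (size s).+1) mem_iota.
rewrite -big_distrr /=; congr (_ * _).
case: (size s) hL => // L _.
rewrite -/(iota 0 L.+2) /= big_cons /= (_ : 1 :: iota 2 L = iota 1 (L + 1)); last by rewrite addn1. rewrite iotaD big_cat big_cons big_nil /=.
have -> : (1 + L < L.+1) = false by lia.
rewrite exp0n // !addn0.
rewrite (eq_big_seq (fun _ => 1)); first by rewrite sum1_size size_iota.
move=> j; rewrite mem_iota => hj.
have -> : (j < L.+1) = true by lia.
have -> : (j == 0) = false by lia.
by rewrite exp1n.
Qed.

Lemma N_one k x : N k [:: x] = 1.
Proof. by rewrite /N /fib /= !big_cons !big_nil /= eqxx exp1n. Qed.

Lemma N_iota k a n : 0 < k -> N k (iota a n.+1) = \prod_(1 <= t < n.+1) (2 ^ k + t - 1).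
Proof.
move=> hk; elim: n a => [|n IH] a.
  by rewrite big_geq // N_one.
have h1 : all (fun z => a < z) (iota a.+1 n.+1) by apply/allP => z; rewrite mem_iota; lia.
have h2 : 0 < size (iota a.+1 n.+1) by rewrite size_iota.
rewrite -[iota a n.+2]/(a :: iota a.+1 n.+1) N_cons //.
rewrite IH [RHS]big_nat_recr //= size_iota; congr (_ * _); lia.
Qed.

Lemma regroup m s : uniq s ->
  \sum_(w <- myperms s) fib s (bs w) ^ m = N m.+1 s.
Proof.
move=> us; have uW := uniq_myperms us.
rewrite /N.
transitivity (\sum_(w <- myperms s) \sum_(σ <- myperms s) (bs w == σ) * fib s σ ^ m).
  apply: eq_big_seq => w hw.
  have hb : bs w \in myperms s.
    by apply: perm_myperms; apply: perm_trans (perm_bs w) (myperms_perm hw).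
  rewrite (big_rem (bs w)) //= eqxx mul1n big1_seq ?addn0 // => σ.
  by rewrite mem_rem_uniq // inE => /and3P [_ h _]; rewrite eq_sym (negbTE h).
rewrite exchange_big /=; apply: eq_bigr => σ _.
by rewrite -big_distrl /= -/(fib s σ) expnS.
Qed.

Definition word n (p : 'S_n) : seq nat := [seq val (p i) | i <- enum 'I_n].

Lemma size_word n (p : 'S_n) : size (word p) = n.
Proof. by rewrite size_map size_enum_ord. Qed.

Lemma nth_word n (p : 'S_n) k (hk : k < n) : nth 0 (word p) k = p (Ordinal hk).
Proof.
rewrite /word (nth_map (Ordinal hk)) ?size_enum_ord //.
by congr (val (p _)); apply: val_inj; rewrite /= nth_enum_ord.
Qed.

Lemma nth_word' n (p : 'S_n) (i : 'I_n) : nth 0 (word p) i = p i.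
Proof. by rewrite (nth_word p (ltn_ord i)); congr (val (p _)); apply: val_inj. Qed.

Lemma word_inj n : injective (@word n).
Proof.
move=> p q e; apply/permP => i; apply: val_inj.
by have := congr1 (fun w => nth 0 w i) e; rewrite /= !nth_word'.
Qed.

Lemma word_perm n (p : 'S_n) : perm_eq (word p) (iota 0 n).
Proof.
apply: uniq_perm.
- rewrite map_inj_uniq ?enum_uniq // => i j /val_inj; exact: perm_inj.
- exact: iota_uniq.
move=> z; rewrite mem_iota add0n /=; apply/mapP/idP => [[i _ ->] | hz].
  exact: ltn_ord.
by exists (p^-1 (Ordinal hz))%g; rewrite ?mem_enum // permKV.
Qed.

Lemma word_surj n w : perm_eq w (iota 0 n) -> exists p : 'S_n, word p = w.
Proof.
move=> pw.
have sw : size w = n by rewrite (perm_size pw) size_iota.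
have uw : uniq w by rewrite (perm_uniq pw) iota_uniq.
have lt i : i < n -> nth 0 w i < n.
  move=> hi; have : nth 0 w i \in w by rewrite mem_nth // sw.
  by rewrite (perm_mem pw) mem_iota.
pose f (i : 'I_n) : 'I_n := insubd i (nth 0 w i).
have vf i : val (f i) = nth 0 w i by rewrite val_insubd lt.
have finj : injective f.
  move=> i j /(congr1 val); rewrite !vf => /eqP.
  by rewrite nth_uniq ?sw // => /eqP /val_inj.
exists (perm finj); apply: (@eq_from_nth _ 0); first by rewrite size_word sw.
move=> k; rewrite size_word => hk.
by rewrite (nth_word _ hk) permE vf.
Qed.

Lemma sum_S n (G : seq nat -> nat) :
  \sum_(p : 'S_n) G (word p) = \sum_(w <- myperms (iota 0 n)) G w.
Proof.
rewrite -(big_map (@word n) xpredT G); apply: perm_big.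
apply: uniq_perm.
- by rewrite map_inj_uniq ?index_enum_uniq //; exact: word_inj.
- exact/uniq_myperms/iota_uniq.
move=> w; apply/mapP/idP => [[p _ ->] | hw].
  exact/perm_myperms/word_perm.
have [p hp] := word_surj (myperms_perm hw).
by exists p; rewrite ?mem_index_enum.
Qed.

Definition lswap i (w : seq nat) :=
  take i w ++ (match drop i w with y :: z :: r => z :: y :: r | r => r end).
Definition lstep (w : seq nat) i :=
  if nth 0 w i.+1 < nth 0 w i then lswap i w else w.

Lemma lswapE i w : i.+1 < size w ->
  lswap i w = take i w ++ nth 0 w i.+1 :: nth 0 w i :: drop i.+2 w.
Proof.
move=> h; rewrite /lswap (drop_nth 0) ?(ltnW h) // (drop_nth 0 h) //.
Qed.

Lemma word_step n (p : 'S_n) i : i.+1 < n -> word (bs_step i p) = lstep (word p) i.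
Proof.
rewrite /bs_step; case: ltnP => h // _.
rewrite /lstep (nth_word p h) (nth_word p (ltnW h)).
set a := Ordinal (ltnW h); set b := Ordinal h.
case: ifP => // hlt.
rewrite lswapE ?size_word //.
apply: (@eq_from_nth _ 0).
  rewrite size_word size_cat size_take /= size_drop !size_word; rewrite (ltnW h); lia.
move=> k; rewrite size_word => hk.
rewrite (nth_word _ hk) permM nth_cat size_take size_word (ltnW h).
case: (ltngtP k i) => hki.
- rewrite nth_take // (nth_word _ hk) tpermD //; apply/eqP => /(congr1 val) /= e; lia.
- have [ek | hk1] := eqVneq k i.+1.
    rewrite (_ : k - i = 1) /=; last by lia.
    rewrite (nth_word _ (ltnW h)) (_ : Ordinal hk = b) ?tpermR //.
    by apply: val_inj; rewrite /= ek.
  have hk2 : i.+1 < k by lia.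
  rewrite (_ : k - i = (k - i.+2).+2) /=; last by lia.
  rewrite nth_drop (_ : i.+2 + (k - i.+2) = k); last by lia.
  rewrite (nth_word _ hk) tpermD //; apply/eqP => /(congr1 val) /= e; lia.
- subst k; rewrite subnn /=.
  rewrite (_ : Ordinal hk = a) ?tpermL; last by apply: val_inj.
  by rewrite (nth_word _ h).
Qed.

Lemma nth_cat_size (a s : seq nat) k : nth 0 (a ++ s) (size a + k) = nth 0 s k.
Proof. by rewrite nth_cat ltnNge leq_addr /= addKn. Qed.

Lemma fold_lstep a y t :
  foldl lstep (a ++ y :: t) (iota (size a) (size t)) = a ++ bs_aux y t.
Proof.
elim: t a y => [|z t IH] a y //=.
have e1 : nth 0 (a ++ [:: y, z & t]) (size a).+1 = z by rewrite -addn1 nth_cat_size.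
have e2 : nth 0 (a ++ [:: y, z & t]) (size a) = y by rewrite -[size a]addn0 nth_cat_size.
rewrite /lstep e1 e2; case: ifP => hzy.
  rewrite /lswap take_size_cat // drop_size_cat // -cat_rcons.
  by rewrite -(size_rcons a z) IH cat_rcons.
by rewrite -cat_rcons -(size_rcons a y) IH cat_rcons.
Qed.

Lemma word_fold n (p : 'S_n) l : all (fun i => i.+1 < n) l ->
  word (foldl (fun q i => bs_step i q) p l) = foldl lstep (word p) l.
Proof.
elim: l p => [|i l IH] p //= /andP [hi hl].
by rewrite IH // word_step.
Qed.

Lemma word_bubble n (p : 'S_n) : word (bubble p) = bs (word p).
Proof.
rewrite /bubble word_fold; last by apply/allP => i; rewrite mem_iota; lia.
have := size_word p; case: (word p) => [|y t] /= <- //.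
exact: (fold_lstep [::] y t).
Qed.

Lemma card_fiber n (p : 'S_n) :
  #|bubble_preimage (bubble p)| = fib (iota 0 n) (bs (word p)).
Proof.
rewrite /bubble_preimage -sum1_card big_mkcond /=.
rewrite /fib -(sum_S n (fun w => (bs w == bs (word p)) : nat)).
apply: eq_bigr => t _; rewrite inE -(inj_eq (@word_inj n)) !word_bubble.
by case: eqP.
Qed.
Unset Implicit Arguments.
Import GRing.Theory.
Local Open Scope ring_scope.

Lemma rat_id (K n : nat) :
  (n.+1`!%:R)^-1 * (\prod_(1 <= t < n.+1) (K + t - 1)%N)%:R
  = \prod_(1 <= t < n.+1) (((K + t - 1)%N)%:R / ((t + 1)%N)%:R) :> rat.
Proof.
elim: n => [|n IH].
  by rewrite !big_geq // invr1 mul1r.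
rewrite big_nat_recr //= [RHS]big_nat_recr //= -IH.
rewrite factS natrM invfM natrM addn1.
ring.
Qed.

Theorem mainTheorem8 (n m : nat) (hn : (1 <= n)%N) (hm : (1 <= m)%N) :
  (n`!%:R)^-1 * \sum_(p : 'S_n) (#|bubble_preimage (bubble p)|%:R) ^+ m
  = \prod_(1 <= j < n)
      (((2 ^ m.+1 + n - j - 1)%N)%:R / ((n - j + 1)%N)%:R) :> rat.
Proof.
rewrite (eq_bigr (fun p => ((fib (iota 0 n) (bs (word p))) ^ m)%N%:R)); last first.
  by move=> p _; rewrite card_fiber natrX.
rewrite -natr_sum (sum_S n (fun w => fib (iota 0 n) (bs w) ^ m)%N) regroup ?iota_uniq //.
case: n hn => // n _.
rewrite N_iota // rat_id [RHS]big_nat_rev /=.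
apply: eq_big_nat => j /andP [h1 h2].
congr (_%:R / _%:R); lia.
Qed.
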